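(* In $U_q(L(\mathfrak{sl}_2))$ the elements $A,A^*$ satisfy $$A^3A^*-[3]_qA^2A^*A+[3]_qAA^*A^2-A^*A^3=\gamma(A^2A^*-A^*A^2)+\varrho(AA^*-A^*A),$$ $$A^{*3}A-[3]_qA^{*2}AA^*+[3]_qA^*AA^{*2}-AA^{*3}=\gamma^*(A^{*2}A-AA^{*2})+\varrho^*(A^*A-AA^* ),$$ where $\gamma=-a(q-q^{-1})^2$, $\varrho=a^2(q-q^{-1})^2-bc(q^2-q^{-2})^2$, $\gamma^*=-a^*(q-q^{-1})^2$, $\varrho^*=a^{*2}(q-q^{-1})^2-b^*c^*(q^2-q^{-2})^2$.
   Context: Let $\mathbb F$ be an algebraically closed field and fix $q,a,b,c,a^*,b^*,c^*\in\mathbb F$ with $q,b,c,b^*,c^*$ nonzero and $q^2\neq\pm1$; write $[n]_q=(q^n-q^{-n})/(q-q^{-1})$. $U_q(\widehat{\mathfrak{sl}}_2)$ is the associative unital $\mathbb F$-algebra with generators $e_i^{\pm},K_i^{\pm1}$ ($i\in\{0,1\}$) and relations $K_iK_i^{-1}=K_i^{-1}K_i=1$, $K_0K_1=K_1K_0$, $K_ie_i^{\pm}K_i^{-1}=q^{\pm2}e_i^{\pm}$, $K_ie_j^{\pm}K_i^{-1}=q^{\mp2}e_j^{\pm}$ ($i\ne j$), $e_i^+e_i^--e_i^-e_i^+=(K_i-K_i^{-1})/(q-q^{-1})$, $e_0^{\pm}e_1^{\mp}=e_1^{\mp}e_0^{\pm}$, and $(e_i^\pm)^3e_j^\pm-[3]_q(e_i^\pm)^2e_j^\pm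 e_i^\pm+[3]_qe_i^\pm e_j^\pm(e_i^\pm)^2-e_j^\pm(e_i^\pm)^3=0$ ($i\ne j$). $U_q(L(\mathfrak{sl}_2))$ is its quotient by the two-sided ideal generated by $K_0K_1-1$ (elements denoted by the same symbols as their images). Fix $u,v,u^*,v^*\in\mathbb F$ with $uv^*=-bb^*q^{-1}(q-q^{-1})^2$ and $vu^*=-cc^*q^{-1}(q-q^{-1})^2$; set $R=ue_0^++ve_1^-K_1$, $L=u^*e_1^++v^*e_0^-K_0$, $A=a1+bK_0+cK_1+R$, $A^*=a^*1+b^*K_0+c^*K_1+L$. *)

(* Defs.v *)
From HB Require Import structures.
From mathcomp Require Import all_boot all_order all_algebra.
Set Implicit Arguments. Unset Strict Implicit. Unset Printing Implicit Defensive.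
Import GRing.Theory.
Local Open Scope ring_scope.

Definition qint (F : fieldType) (q : F) (n : nat) : F :=
  (q ^+ n - q ^- n) / (q - q^-1).

Definition serre (F : fieldType) (B : lalgType F) (q : F) (x y : B) : B :=
  x ^+ 3 * y - qint q 3 *: (x ^+ 2 * y * x) + qint q 3 *: (x * y * x ^+ 2)
  - y * x ^+ 3.

(* The defining relations of U_q(L(sl_2)) : those of U_q(\hat{sl}_2)
   (generators e0p = e_0^+, e0m = e_0^-, e1p = e_1^+, e1m = e_1^-, K0, K1 and
   their inverses K0i = K_0^{-1}, K1i = K_1^{-1}) together with K0 K1 = 1. *)
Record UqLsl2_rels (F : fieldType) (B : algType F) (q : F)
    (e0p e0m e1p e1m K0 K1 K0i K1i : B) : Prop := {
  rel_K0K0i : K0 * K0i = 1;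
  rel_K0iK0 : K0i * K0 = 1;
  rel_K1K1i : K1 * K1i = 1;
  rel_K1iK1 : K1i * K1 = 1;
  rel_K0K1c : K0 * K1 = K1 * K0;
  rel_K0e0p : K0 * e0p * K0i = q ^+ 2 *: e0p;
  rel_K0e0m : K0 * e0m * K0i = q ^- 2 *: e0m;
  rel_K1e1p : K1 * e1p * K1i = q ^+ 2 *: e1p;
  rel_K1e1m : K1 * e1m * K1i = q ^- 2 *: e1m;
  rel_K0e1p : K0 * e1p * K0i = q ^- 2 *: e1p;
  rel_K0e1m : K0 * e1m * K0i = q ^+ 2 *: e1m;
  rel_K1e0p : K1 * e0p * K1i = q ^- 2 *: e0p;
  rel_K1e0m : K1 * e0m * K1i = q ^+ 2 *: e0m;
  rel_comm0 : e0p * e0m - e0m * e0p = (q - q^-1)^-1 *: (K0 - K0i);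
  rel_comm1 : e1p * e1m - e1m * e1p = (q - q^-1)^-1 *: (K1 - K1i);
  rel_e0pe1m : e0p * e1m = e1m * e0p;
  rel_e0me1p : e0m * e1p = e1p * e0m;
  rel_serre01p : serre q e0p e1p = 0;
  rel_serre10p : serre q e1p e0p = 0;
  rel_serre01m : serre q e0m e1m = 0;
  rel_serre10m : serre q e1m e0m = 0;
  rel_loop : K0 * K1 = 1
}.

(* Main.v *)
Require Import Defs.
From HB Require Import structures.
From mathcomp Require Import all_boot all_order all_algebra.
From Stdlib Require List.
From Stdlib Require Import Ring Field.


Inductive letter := L0p | L0m | L1p | L1m.
Definition leqb (x y : letter) : bool :=
  match x, y with
  | L0p, L0p | L0m, L0m | L1p, L1p | L1m, L1m => true
  | _, _ => false end.
Fixpoint weqb (w1 w2 : list letter) : bool :=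
  match w1, w2 with
  | nil, nil => true
  | x :: w1', y :: w2' => leqb x y && weqb w1' w2'
  | _, _ => false end.
Definition isplus l := match l with L0p | L1p => true | _ => false end.

Inductive cx := CV (n : nat) | CQ | CQI | CD | CT | C1 | CAdd (x y : cx)
  | CMul (x y : cx) | COpp (x : cx).

Definition mkMul (x y : cx) : cx :=
  match x, y with C1, _ => y | _, C1 => x | _, _ => CMul x y end.

Definition mono := ((nat * nat) * list letter * list letter)%type.
Definition term := (cx * mono)%type.

Definition meqb (m1 m2 : mono) : bool :=
  match m1, m2 with
  | ((i1, j1), M1, P1), ((i2, j2), M2, P2) =>
     (i1 == i2) && (j1 == j2) && weqb M1 M2 && weqb P1 P2 end.

Definition k0fac l := match l with L0p | L1m => CMul CQI CQI | _ => CMul CQ CQ end.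
Definition k1fac l := match l with L0p | L1m => CMul CQ CQ | _ => CMul CQI CQI end.
Fixpoint wk0 (w : list letter) : cx :=
  match w with nil => C1 | l :: w' => mkMul (k0fac l) (wk0 w') end.
Fixpoint wk1 (w : list letter) : cx :=
  match w with nil => C1 | l :: w' => mkMul (k1fac l) (wk1 w') end.
Fixpoint cxpow (c : cx) (n : nat) : cx :=
  match n with 0 => C1 | S n' => mkMul c (cxpow c n') end.
Definition wks (w : list letter) (s : nat * nat) : cx :=
  mkMul (cxpow (wk0 w) s.1) (cxpow (wk1 w) s.2).

Definition kmul0 (s : nat * nat) : nat * nat :=
  match s with (i, 0) => (S i, 0) | (i, S j) => (i, j) end.
Definition kmul1 (s : nat * nat) : nat * nat :=
  match s with (0, j) => (0, S j) | (S i, 0) => (i, 0) | (i, j) => (i, S j) end.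
Fixpoint iter0 n s := match n with 0 => s | S n' => kmul0 (iter0 n' s) end.
Fixpoint iter1 n s := match n with 0 => s | S n' => kmul1 (iter1 n' s) end.
Definition kadd (s t : nat * nat) := iter1 t.2 (iter0 t.1 s).

Definition redw (x y : letter) (w : list letter) : list (cx * list letter) :=
  if weqb w [:: y; x; x; x] then
    [:: (C1, [:: x; x; x; y]); (COpp CT, [:: x; x; y; x]); (CT, [:: x; y; x; x])]
  else if weqb w [:: x; y; y; y] then
    [:: (C1, [:: y; y; y; x]); (COpp CT, [:: y; y; x; y]); (CT, [:: y; x; y; y])]
  else [:: (C1, w)].

Definition swapc (p f : letter) : option cx :=
  match p, f with
  | L0p, L0m => Some CD
  | L1p, L1m => Some (COpp CD)
  | _, _ => None end.

Definition ptrm := (cx * (nat * nat) * bool * list letter)%type.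

Fixpoint fmap {A B} (g : A -> list B) (l : list A) : list B :=
  match l with nil => nil | t :: l' => g t ++ fmap g l' end.

Definition pstep (p f : letter) (t : ptrm) : list ptrm :=
  match t with (c, s, b, P1) =>
    let c1 := mkMul c (wks [:: p] s) in
    if b then (c1, s, true, p :: P1) ::
       match swapc p f with
       | None => nil
       | Some d => [:: (mkMul c1 d, kmul0 s, false, P1);
                       (COpp (mkMul c1 d), kmul1 s, false, P1)] end
    else [:: (c1, s, false, p :: P1)] end.

Fixpoint pastP (P : list letter) (f : letter) : list ptrm :=
  match P with
  | nil => [:: (C1, (0, 0), true, nil)]
  | p :: P1 => fmap (pstep p f) (pastP P1 f) end.

Definition appK0 (t : term) : term :=
  match t with (c, (ij, M, P)) => (mkMul c (mkMul (wk0 M) (wk0 P)), (kmul0 ij, M, P)) end.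
Definition appK1 (t : term) : term :=
  match t with (c, (ij, M, P)) => (mkMul c (mkMul (wk1 M) (wk1 P)), (kmul1 ij, M, P)) end.

Definition appPlus (e : letter) (t : term) : list term :=
  match t with (c, (ij, M, P)) =>
    map (fun cw => (mkMul c cw.1, (ij, M, cw.2))) (redw L0p L1p (P ++ [:: e])) end.

Definition mstep (c : cx) (ij : nat * nat) (M : list letter) (f : letter) (u : ptrm)
  : list term :=
  match u with (c', s, b, P') =>
    let c2 := mkMul c (mkMul c' (wks M s)) in
    let ij2 := kadd ij s in
    if b then map (fun cw => (mkMul c2 cw.1, (ij2, cw.2, P'))) (redw L0m L1m (M ++ [:: f]))
    else [:: (c2, (ij2, M, P'))] end.

Definition appMinus (f : letter) (t : term) : list term :=
  match t with (c, (ij, M, P)) =>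
    if all isplus P && ~~ isplus f then fmap (mstep c ij M f) (pastP P f)
    else [:: (c, (ij, M, P ++ [:: f]))] end.

Definition pletter (l : letter) (p : list term) : list term :=
  if isplus l then fmap (appPlus l) p else fmap (appMinus l) p.
Fixpoint pword (w : list letter) (p : list term) : list term :=
  match w with nil => p | l :: w' => pword w' (pletter l p) end.
Fixpoint pK0n n p := match n with 0 => p | S n' => map appK0 (pK0n n' p) end.
Fixpoint pK1n n p := match n with 0 => p | S n' => map appK1 (pK1n n' p) end.
Definition pscale (c : cx) (p : list term) : list term :=
  map (fun t => (mkMul c t.1, t.2)) p.

Fixpoint ins (c : cx) (m : mono) (l : list term) : list term :=
  match l with
  | nil => [:: (c, m)]
  | (c', m') :: l' => if meqb m m' then (CAdd c' c, m') :: l' else (c', m') :: ins c m l' end.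
Fixpoint collect (l : list term) : list term :=
  match l with nil => nil | t :: l' => ins t.1 t.2 (collect l') end.

Definition mulmono (p : list term) (t : term) : list term :=
  match t with (c2, ((i, j), M2, P2)) =>
    pscale c2 (pword P2 (pword M2 (pK1n j (pK0n i p)))) end.
Definition mulpoly (p1 p2 : list term) : list term := collect (fmap (mulmono p1) p2).

Inductive ex := XK0 | XK1 | XL (l : letter) | XOne | XAdd (x y : ex) | XSub (x y : ex)
  | XMul (x y : ex) | XScale (c : cx) (x : ex) | XPow (x : ex) (n : nat).

Definition one : list term := [:: (C1, ((0, 0), nil, nil))].
Fixpoint ppow (p : list term) (n : nat) : list term :=
  match n with 0 => one | S n' => mulpoly p (ppow p n') end.

Fixpoint nf (e : ex) : list term :=
  match e with
  | XK0 => [:: (C1, ((1, 0), nil, nil))]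
  | XK1 => [:: (C1, ((0, 1), nil, nil))]
  | XL l => if isplus l then [:: (C1, ((0, 0), nil, [:: l]))] else [:: (C1, ((0, 0), [:: l], nil))]
  | XOne => one
  | XAdd x y => collect (nf x ++ nf y)
  | XSub x y => collect (nf x ++ pscale (COpp C1) (nf y))
  | XMul x y => mulpoly (nf x) (nf y)
  | XScale c x => pscale c (nf x)
  | XPow x n => ppow (nf x) n
  end.

Definition Aex (a b c u v : cx) : ex :=
  XAdd (XAdd (XAdd (XScale a XOne) (XScale b XK0)) (XScale c XK1))
       (XAdd (XScale u (XL L0p)) (XScale v (XMul (XL L1m) XK1))).
Definition Asex (a b c u v : cx) : ex :=
  XAdd (XAdd (XAdd (XScale a XOne) (XScale b XK0)) (XScale c XK1))
       (XAdd (XScale u (XL L1p)) (XScale v (XMul (XL L0m) XK0))).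
Definition serex (x y : ex) : ex :=
  XSub (XAdd (XSub (XMul (XPow x 3) y) (XScale CT (XMul (XMul (XPow x 2) y) x)))
          (XScale CT (XMul (XMul x y) (XPow x 2)))) (XMul y (XPow x 3)).
Definition relex (x y : ex) (g r : cx) : ex :=
  XSub (serex x y) (XAdd (XScale g (XSub (XMul (XPow x 2) y) (XMul y (XPow x 2))))
                         (XScale r (XSub (XMul x y) (XMul y x)))).
Definition E1 := relex (Aex (CV 0) (CV 1) (CV 2) (CV 6) (CV 7)) (Asex (CV 3) (CV 4) (CV 5) (CV 8) (CV 9)) (CV 10) (CV 11).
Definition E2 := relex (Asex (CV 3) (CV 4) (CV 5) (CV 8) (CV 9)) (Aex (CV 0) (CV 1) (CV 2) (CV 6) (CV 7)) (CV 12) (CV 13).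


Section G.
Variables (R:Type) (rO rI:R) (radd rmul rsub: R->R->R) (ropp: R->R) (rdiv: R->R->R) (rinv: R->R).
Variable Fth : field_theory rO rI radd rmul rsub ropp rdiv rinv (@eq R).
Add Field Ff : Fth.
Notation "x + y" := (radd x y). Notation "x * y" := (rmul x y). Notation "x - y" := (rsub x y).
Notation "- x" := (ropp x). Notation "/ x" := (rinv x). Notation "x / y" := (rdiv x y).
Notation "0" := rO. Notation "1" := rI.

Fixpoint icg (q : R) (env : list R) (x : cx) : R :=
  match x with CV n => nth 0 env n | CQ => q | CQI => / q | CD => / (q - / q)
  | CT => (q * (q * q) - / (q * (q * q))) / (q - / q) | C1 => 1
  | CAdd x y => icg q env x + icg q env y | CMul x y => icg q env x * icg q env y
  | COpp x => - icg q env x end.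

Definition coefhyp (q a b c a' b' c' u v u' v' g rho gs rhos : R) : Prop :=
  (q <> 0 /\ q - / q <> 0 /\ q * q - 1 <> 0 /\ u <> 0 /\ v <> 0) /\
  (v' = - (b * b' * / q * ((q - / q) * (q - / q))) / u /\
  u' = - (c * c' * / q * ((q - / q) * (q - / q))) / v /\
  g = - (a * ((q - / q) * (q - / q))) /\
  rho = a * a * ((q - / q) * (q - / q)) - b * c * ((q * q - / (q * q)) * (q * q - / (q * q))) /\
  gs = - (a' * ((q - / q) * (q - / q))) /\
  rhos = a' * a' * ((q - / q) * (q - / q)) - b' * c' * ((q * q - / (q * q)) * (q * q - / (q * q)))).

Ltac coefs E :=
  let l := eval vm_compute in (nf E) in
  assert (HH : nf E = l) by (vm_compute; reflexivity); rewrite HH;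
  repeat (first [apply List.Forall_nil | apply List.Forall_cons]); cbn [icg nth fst];
  field; repeat split; assumption.

Lemma coef1 (q a b c a' b' c' u v u' v' g rho gs rhos : R) :
  coefhyp q a b c a' b' c' u v u' v' g rho gs rhos ->
  List.Forall (fun t => icg q [:: a; b; c; a'; b'; c'; u; v; u'; v'; g; rho; gs; rhos] t.1 = 0) (nf E1).
Proof.
intros [[hq [hqq [hq2 [hu hv]]]] [-> [-> [-> [-> [-> ->]]]]]].
Time coefs E1.
Qed.

Lemma coef2 (q a b c a' b' c' u v u' v' g rho gs rhos : R) :
  coefhyp q a b c a' b' c' u v u' v' g rho gs rhos ->
  List.Forall (fun t => icg q [:: a; b; c; a'; b'; c'; u; v; u'; v'; g; rho; gs; rhos] t.1 = 0) (nf E2).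
Proof.
intros [[hq [hqq [hq2 [hu hv]]]] [-> [-> [-> [-> [-> ->]]]]]].
Time coefs E2.
Qed.
End G.


Import GRing.Theory.
Section Sound.
Local Open Scope ring_scope.
Variables (F : fieldType) (B : algType F) (q : F) (env : seq F).
Variables (e0p e0m e1p e1m K0 K1 K0i K1i : B).
Hypothesis H : UqLsl2_rels q e0p e0m e1p e1m K0 K1 K0i K1i.
Hypothesis hq : q != 0.

Fixpoint ic (x : cx) : F :=
  match x with CV n => nth 0 env n | CQ => q | CQI => q^-1 | CD => (q - q^-1)^-1
  | CT => qint q 3 | C1 => 1
  | CAdd x y => ic x + ic y | CMul x y => ic x * ic y | COpp x => - ic x end.

Lemma ic_mkMul x y : ic (mkMul x y) = ic x * ic y.
Proof. by case: x => *; case: y => * /=; rewrite ?mul1r ?mulr1. Qed.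

Definition lg (l : letter) : B :=
  match l with L0p => e0p | L0m => e0m | L1p => e1p | L1m => e1m end.
Definition wprod (w : list letter) : B := foldr (fun l acc => lg l * acc) 1 w.
Definition Kp (s : nat * nat) : B := K0 ^+ s.1 * K1 ^+ s.2.
Definition im (m : mono) : B := Kp m.1.1 * wprod m.1.2 * wprod m.2.
Definition it (t : term) : B := ic t.1 *: im t.2.
Definition sumf {X} (i : X -> B) (l : list X) : B := foldr (fun t acc => i t + acc) 0 l.
Definition ip := sumf it.

Lemma sumf_cat {X} (i : X -> B) l1 l2 : sumf i (l1 ++ l2) = sumf i l1 + sumf i l2.
Proof. by elim: l1 => [|t l IH] /=; rewrite ?add0r // IH addrA. Qed.

Lemma sumf_fmap_r {X Y} (i : X -> B) (j : Y -> B) (g : Y -> list X) l Z :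
  (forall t, sumf i (g t) = j t * Z) -> sumf i (fmap g l) = sumf j l * Z.
Proof. move=> Hg; elim: l => [|t l IH] /=; first by rewrite mul0r.
by rewrite sumf_cat Hg IH mulrDl. Qed.

Lemma sumf_fmap_l {X Y} (i : X -> B) (j : Y -> B) (g : Y -> list X) l Z :
  (forall t, sumf i (g t) = Z * j t) -> sumf i (fmap g l) = Z * sumf j l.
Proof. move=> Hg; elim: l => [|t l IH] /=; first by rewrite mulr0.
by rewrite sumf_cat Hg IH mulrDr. Qed.

Lemma sumf_map {X Y} (i : X -> B) (j : Y -> B) (g : Y -> X) l Z :
  (forall t, i (g t) = j t * Z) -> sumf i (map g l) = sumf j l * Z.
Proof. move=> Hg; elim: l => [|t l IH] /=; first by rewrite mul0r.
by rewrite Hg IH mulrDl. Qed.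

Lemma wprod_cat w1 w2 : wprod (w1 ++ w2) = wprod w1 * wprod w2.
Proof. by elim: w1 => [|l w IH] /=; rewrite ?mul1r // IH mulrA. Qed.

Lemma leqbP x y : leqb x y -> x = y.
Proof. by case: x; case: y. Qed.
Lemma weqbP w1 w2 : weqb w1 w2 -> w1 = w2.
Proof. elim: w1 w2 => [|x w1 IH] [|y w2] //= /andP [/leqbP -> /IH ->] //. Qed.
Lemma meqbP m1 m2 : meqb m1 m2 -> m1 = m2.
Proof.
case: m1 => [[[i1 j1] M1] P1]; case: m2 => [[[i2 j2] M2] P2] /=.
by move=> /andP [/andP [/andP [/eqP -> /eqP ->] /weqbP ->] /weqbP ->].
Qed.

Lemma K01 : K0 * K1 = 1. Proof. exact: rel_loop H. Qed.
Lemma K10 : K1 * K0 = 1. Proof. by rewrite -(rel_K0K1c H) K01. Qed.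
Lemma K0iE : K0i = K1.
Proof. by rewrite -[K0i]mulr1 -K01 mulrA (rel_K0iK0 H) mul1r. Qed.
Lemma K1iE : K1i = K0.
Proof. by rewrite -[K1i]mul1r -K01 -mulrA (rel_K1K1i H) mulr1. Qed.

Lemma conj0 x s r : K0 * x * K1 = s *: x -> r * s = 1 -> x * K0 = r *: (K0 * x).
Proof.
move=> Hx Hrs.
have -> : K0 * x = s *: (x * K0) by rewrite -[K0 * x]mulr1 -K10 mulrA Hx scalerAl.
by rewrite scalerA Hrs scale1r.
Qed.
Lemma conj1 x s r : K1 * x * K0 = s *: x -> r * s = 1 -> x * K1 = r *: (K1 * x).
Proof.
move=> Hx Hrs.
have -> : K1 * x = s *: (x * K1) by rewrite -[K1 * x]mulr1 -K01 mulrA Hx scalerAl.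
by rewrite scalerA Hrs scale1r.
Qed.

Lemma qq1 : q^-1 * q^-1 * q ^+ 2 = 1.
Proof. by rewrite expr2 mulrACA mulVf // mulr1. Qed.
Lemma qq2 : q * q * q ^- 2 = 1.
Proof. by rewrite expr2 mulfV // mulf_neq0. Qed.

Lemma k0facP l : lg l * K0 = ic (k0fac l) *: (K0 * lg l).
Proof.
case: l => /=.
- by apply: (@conj0 _ (q ^+ 2) _); [rewrite -K0iE (rel_K0e0p H)|exact: qq1].
- by apply: (@conj0 _ (q ^- 2) _); [rewrite -K0iE (rel_K0e0m H)|exact: qq2].
- by apply: (@conj0 _ (q ^- 2) _); [rewrite -K0iE (rel_K0e1p H)|exact: qq2].
- by apply: (@conj0 _ (q ^+ 2) _); [rewrite -K0iE (rel_K0e1m H)|exact: qq1].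
Qed.
Lemma k1facP l : lg l * K1 = ic (k1fac l) *: (K1 * lg l).
Proof.
case: l => /=.
- by apply: (@conj1 _ (q ^- 2) _); [rewrite -K1iE (rel_K1e0p H)|exact: qq2].
- by apply: (@conj1 _ (q ^+ 2) _); [rewrite -K1iE (rel_K1e0m H)|exact: qq1].
- by apply: (@conj1 _ (q ^+ 2) _); [rewrite -K1iE (rel_K1e1p H)|exact: qq1].
- by apply: (@conj1 _ (q ^- 2) _); [rewrite -K1iE (rel_K1e1m H)|exact: qq2].
Qed.

Lemma wk0P w : wprod w * K0 = ic (wk0 w) *: (K0 * wprod w).
Proof.
elim: w => [|l w IH] /=; first by rewrite mul1r mulr1 scale1r.
rewrite ic_mkMul -mulrA IH -scalerAr [lg l * (K0 * _)]mulrA k0facP -scalerAl scalerA.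
by rewrite -mulrA mulrC.
Qed.
Lemma wk1P w : wprod w * K1 = ic (wk1 w) *: (K1 * wprod w).
Proof.
elim: w => [|l w IH] /=; first by rewrite mul1r mulr1 scale1r.
rewrite ic_mkMul -mulrA IH -scalerAr [lg l * (K1 * _)]mulrA k1facP -scalerAl scalerA.
by rewrite -mulrA mulrC.
Qed.

Lemma cxpowP c n : ic (cxpow c n) = ic c ^+ n.
Proof. by elim: n => [|n IH] //=; rewrite ic_mkMul IH exprS. Qed.

Lemma wksP w s : wprod w * Kp s = ic (wks w s) *: (Kp s * wprod w).
Proof.
case: s => i j; rewrite /wks /Kp /= ic_mkMul !cxpowP.
have E0 : forall n, wprod w * K0 ^+ n = ic (wk0 w) ^+ n *: (K0 ^+ n * wprod w).
  elim=> [|n IH]; first by rewrite !expr0 mulr1 mul1r scale1r.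
  rewrite exprSr mulrA IH -scalerAl -[K0 ^+ n * wprod w * K0]mulrA wk0P -scalerAr scalerA.
  by rewrite [K0 ^+ n * (K0 * _)]mulrA exprSr.
have E1 : forall n, wprod w * K1 ^+ n = ic (wk1 w) ^+ n *: (K1 ^+ n * wprod w).
  elim=> [|n IH]; first by rewrite !expr0 mulr1 mul1r scale1r.
  rewrite exprSr mulrA IH -scalerAl -[K1 ^+ n * wprod w * K1]mulrA wk1P -scalerAr scalerA.
  by rewrite [K1 ^+ n * (K1 * _)]mulrA exprSr.
rewrite mulrA E0 -scalerAl -[K0 ^+ i * wprod w * K1 ^+ j]mulrA E1 -scalerAr scalerA.
by rewrite mulrA.
Qed.

Lemma kmul0P s : Kp s * K0 = Kp (kmul0 s).
Proof.
case: s => i [|j]; rewrite /Kp /=.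
  by rewrite !expr0 !mulr1 exprSr.
by rewrite exprSr -mulrA -[K1 ^+ j * K1 * K0]mulrA K10 mulr1.
Qed.
Lemma kmul1P s : Kp s * K1 = Kp (kmul1 s).
Proof.
case: s => [[|i] [|j]]; rewrite /Kp /= ?exprSr //.
- by rewrite !expr0 !mul1r.
- by rewrite !mul1r.
- by rewrite !expr0 !mulr1 -mulrA K01 mulr1.
- by rewrite -!mulrA.
Qed.
Lemma iter0P n s : Kp s * K0 ^+ n = Kp (iter0 n s).
Proof. by elim: n => [|n IH] /=; rewrite ?expr0 ?mulr1 // exprSr mulrA IH kmul0P. Qed.
Lemma iter1P n s : Kp s * K1 ^+ n = Kp (iter1 n s).
Proof. by elim: n => [|n IH] /=; rewrite ?expr0 ?mulr1 // exprSr mulrA IH kmul1P. Qed.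
Lemma kaddP s t : Kp s * Kp t = Kp (kadd s t).
Proof. by rewrite /kadd {2}/Kp mulrA iter0P iter1P. Qed.

Definition ipw := sumf (fun cw : cx * list letter => ic cw.1 *: wprod cw.2).

Lemma redwP x y w : serre q (lg x) (lg y) = 0 -> serre q (lg y) (lg x) = 0 ->
  ipw (redw x y w) = wprod w.
Proof.
move=> S1 S2; rewrite /redw.
case: ifP => [/weqbP -> | _].
  move: S1; rewrite /serre /ipw /= !exprS expr0 !mulr1 !mulrA => S1.
  rewrite scale1r scaleNr addr0 !addrA.
  by apply/eqP; rewrite -subr_eq0; apply/eqP; rewrite -[RHS]S1.
case: ifP => [/weqbP -> | _].
  move: S2; rewrite /serre /ipw /= !exprS expr0 !mulr1 !mulrA => S2.
  rewrite scale1r scaleNr addr0 !addrA.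
  by apply/eqP; rewrite -subr_eq0; apply/eqP; rewrite -[RHS]S2.
by rewrite /ipw /= scale1r addr0.
Qed.

Lemma swapP p f : isplus p -> ~~ isplus f ->
  lg p * lg f = lg f * lg p + (match swapc p f with None => 0 | Some d => ic d *: (K0 - K1) end).
Proof.
case: p => //; case: f => //= _ _; rewrite ?addr0.
- apply/eqP; rewrite addrC -subr_eq; apply/eqP; by rewrite (rel_comm0 H) K0iE.
- exact: (rel_e0pe1m H).
- exact: (esym (rel_e0me1p H)).
- apply/eqP; rewrite addrC -subr_eq; apply/eqP.
  by rewrite (rel_comm1 H) K1iE scaleNr -scalerN opprB.
Qed.

Definition itp (f : letter) (u : ptrm) : B :=
  ic u.1.1.1 *: (Kp u.1.1.2 * ((if u.1.2 then lg f else 1) * wprod u.2)).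

Lemma pstepP p f u : isplus p -> ~~ isplus f ->
  sumf (itp f) (pstep p f u) = lg p * itp f u.
Proof.
move=> hp hf; case: u => [[[c s] b] P1].
have Hw : lg p * Kp s = ic (wks [:: p] s) *: (Kp s * lg p).
  by have := wksP [:: p] s; rewrite /= mulr1.
have -> : lg p * itp f (c, s, b, P1) = ic (mkMul c (wks [:: p] s)) *:
    (Kp s * (lg p * ((if b then lg f else 1) * wprod P1))).
  rewrite /itp /= -scalerAr [lg p * (Kp s * _)]mulrA Hw -scalerAl scalerA ic_mkMul.
  by rewrite -!mulrA.
case: b => /=; last by rewrite /itp /= addr0 !mul1r.
rewrite /itp /= [lg p * (lg f * _)]mulrA (@swapP p f hp hf).
case: (swapc p f) => [d|] /=; last by rewrite !addr0 -[lg f * lg p * _]mulrA.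
rewrite addr0 mulrDl mulrDr scalerDr -[lg f * lg p * _]mulrA; congr (_ + _).
rewrite -scalerAl -scalerAr scalerA mulrBl mulrBr scalerBr !mulrA kmul0P kmul1P.
by rewrite ic_mkMul !mulr1 scaleNr.
Qed.

Lemma pastPP P f : all isplus P -> ~~ isplus f ->
  sumf (itp f) (pastP P f) = wprod P * lg f.
Proof.
move=> hP hf; elim: P hP => [|p P IH] /=.
  by move=> _; rewrite /itp /Kp /= !expr0 scale1r !mul1r mulr1 addr0.
move=> /andP [hp hP].
rewrite (@sumf_fmap_l _ _ (itp f) (itp f) _ _ (lg p)) ?IH ?mulrA // => u.
exact: pstepP.
Qed.

Lemma Kmove0 X M P : X * wprod M * wprod P * K0 =
  (ic (wk0 M) * ic (wk0 P)) *: (X * K0 * wprod M * wprod P).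
Proof.
rewrite -[X * wprod M * wprod P * K0]mulrA wk0P -scalerAr.
rewrite [X * wprod M * (K0 * _)]mulrA -[X * wprod M * K0]mulrA wk0P -scalerAr -scalerAl.
by rewrite scalerA !mulrA [ic _ * _]mulrC.
Qed.
Lemma Kmove1 X M P : X * wprod M * wprod P * K1 =
  (ic (wk1 M) * ic (wk1 P)) *: (X * K1 * wprod M * wprod P).
Proof.
rewrite -[X * wprod M * wprod P * K1]mulrA wk1P -scalerAr.
rewrite [X * wprod M * (K1 * _)]mulrA -[X * wprod M * K1]mulrA wk1P -scalerAr -scalerAl.
by rewrite scalerA !mulrA [ic _ * _]mulrC.
Qed.

Lemma appK0P t : it (appK0 t) = it t * K0.
Proof.
case: t => c [[ij M] P]; rewrite /it /im /= -scalerAl Kmove0 scalerA kmul0P.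
by rewrite !ic_mkMul.
Qed.
Lemma appK1P t : it (appK1 t) = it t * K1.
Proof.
case: t => c [[ij M] P]; rewrite /it /im /= -scalerAl Kmove1 scalerA kmul1P.
by rewrite !ic_mkMul.
Qed.

Lemma mapP1 c ij M l :
  sumf it (map (fun cw => (mkMul c cw.1, (ij, M, cw.2))) l) = ic c *: (Kp ij * wprod M * ipw l).
Proof.
elim: l => [|[c' w] l IH] /=; first by rewrite /ipw /= mulr0 scaler0.
rewrite IH /ipw /= mulrDr scalerDr; congr (_ + _).
by rewrite /it /im /= ic_mkMul -scalerA scalerAr.
Qed.
Lemma mapP2 c ij P l :
  sumf it (map (fun cw => (mkMul c cw.1, (ij, cw.2, P))) l) = ic c *: (Kp ij * ipw l * wprod P).
Proof.
elim: l => [|[c' w] l IH] /=; first by rewrite /ipw /= mulr0 mul0r scaler0.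
rewrite IH /ipw /= mulrDr mulrDl scalerDr; congr (_ + _).
by rewrite /it /im /= ic_mkMul -scalerAr -scalerAl scalerA.
Qed.

Lemma appPlusP e t : ip (appPlus e t) = it t * lg e.
Proof.
case: t => c [[ij M] P]; rewrite /ip /appPlus mapP1 redwP.
- by rewrite wprod_cat /= mulr1 /it /im /= -scalerAl mulrA.
- exact: (rel_serre01p H).
- exact: (rel_serre10p H).
Qed.

Lemma mstepP c ij M f u :
  sumf it (mstep c ij M f u) = (ic c *: (Kp ij * wprod M)) * itp f u.
Proof.
case: u => [[[c' s] b] P'].
have E : (ic c *: (Kp ij * wprod M)) * itp f (c', s, b, P') =
   ic (mkMul c (mkMul c' (wks M s))) *:
     (Kp (kadd ij s) * (wprod M * (if b then lg f else 1)) * wprod P').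
  rewrite /itp; cbn [fst snd]; rewrite -scalerAl -scalerAr scalerA.
  rewrite [Kp ij * wprod M * (Kp s * _)]mulrA -[Kp ij * wprod M * Kp s]mulrA wksP.
  rewrite -scalerAr -scalerAl scalerA [Kp ij * (Kp s * _)]mulrA kaddP !ic_mkMul mulrA.
  by rewrite -!mulrA.
rewrite {}E; case: b => /=; last by rewrite /it /im /= mulr1 addr0.
rewrite mapP2 redwP ?wprod_cat /= ?mulr1 //.
- exact: (rel_serre01m H).
- exact: (rel_serre10m H).
Qed.

Lemma appMinusP f t : ip (appMinus f t) = it t * lg f.
Proof.
case: t => c [[ij M] P]; rewrite /appMinus.
case: ifP => [/andP [hP hf] | _].
  rewrite /ip (@sumf_fmap_l _ _ it (itp f) _ _ (ic c *: (Kp ij * wprod M))).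
    by rewrite pastPP // /it /im /= -!scalerAl mulrA.
  by move=> u; exact: mstepP.
by rewrite /ip /= addr0 /it /im /= wprod_cat /= mulr1 -scalerAl mulrA.
Qed.

Lemma pletterP l p : ip (pletter l p) = ip p * lg l.
Proof.
rewrite /pletter; case: ifP => _; rewrite /ip (@sumf_fmap_r _ _ it it _ _ (lg l)) //.
- exact: appPlusP.
- exact: appMinusP.
Qed.
Lemma pwordP w p : ip (pword w p) = ip p * wprod w.
Proof.
elim: w p => [|l w IH] p /=; first by rewrite mulr1.
by rewrite IH pletterP mulrA.
Qed.
Lemma pK0nP n p : ip (pK0n n p) = ip p * K0 ^+ n.
Proof.
elim: n => [|n IH] /=; first by rewrite mulr1.
by rewrite /ip (@sumf_map _ _ it it _ _ K0) -/(ip _) ?IH ?exprSr ?mulrA //; exact: appK0P.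
Qed.
Lemma pK1nP n p : ip (pK1n n p) = ip p * K1 ^+ n.
Proof.
elim: n => [|n IH] /=; first by rewrite mulr1.
by rewrite /ip (@sumf_map _ _ it it _ _ K1) -/(ip _) ?IH ?exprSr ?mulrA //; exact: appK1P.
Qed.
Lemma pscaleP c p : ip (pscale c p) = ic c *: ip p.
Proof.
elim: p => [|t p IH] /=; first by rewrite /ip /= scaler0.
by rewrite /ip /= -/(ip _) IH scalerDr /it /= ic_mkMul scalerA.
Qed.
Lemma mulmonoP p t : ip (mulmono p t) = ip p * it t.
Proof.
case: t => c [[[i j] M] P]; rewrite /mulmono pscaleP !pwordP pK1nP pK0nP.
by rewrite /it /im /Kp /= -scalerAr !mulrA.
Qed.
Lemma insP c m l : ip (ins c m l) = ic c *: im m + ip l.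
Proof.
elim: l => [|[c' m'] l IH] /=; first by rewrite /ip /= /it.
case: ifP => [/meqbP -> | _].
  by rewrite /ip /= /it /= scalerDl addrCA addrA.
by rewrite /ip /= -/(ip _) IH addrCA.
Qed.
Lemma collectP l : ip (collect l) = ip l.
Proof. by elim: l => [|t l IH] //=; rewrite insP IH. Qed.
Lemma mulpolyP p1 p2 : ip (mulpoly p1 p2) = ip p1 * ip p2.
Proof.
by rewrite /mulpoly collectP /ip (@sumf_fmap_l _ _ it it _ _ (ip p1)) //; exact: mulmonoP.
Qed.
Lemma oneP : ip one = 1.
Proof. by rewrite /ip /= /it /im /Kp /= scale1r !mulr1 addr0. Qed.
Lemma ppowP p n : ip (ppow p n) = ip p ^+ n.
Proof. elim: n => [|n IH]; first exact: oneP. by change (ppow p n.+1) with (mulpoly p (ppow p n)); rewrite mulpolyP IH exprS. Qed.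

Fixpoint iex (e : ex) : B :=
  match e with
  | XK0 => K0 | XK1 => K1 | XL l => lg l | XOne => 1
  | XAdd x y => iex x + iex y | XSub x y => iex x - iex y
  | XMul x y => iex x * iex y | XScale c x => ic c *: iex x
  | XPow x n => iex x ^+ n end.

Lemma nfP e : ip (nf e) = iex e.
Proof.
elim: e => [| |l| |x IHx y IHy|x IHx y IHy|x IHx y IHy|c x IHx|x IHx n] /=.
- by rewrite /ip /= /it /im /Kp /= scale1r expr1 !mulr1 addr0.
- by rewrite /ip /= /it /im /Kp /= scale1r expr1 !mulr1 mul1r addr0.
- by case: ifP => _; rewrite /ip /= /it /im /Kp /= scale1r !mulr1 !mul1r addr0.
- exact: oneP.
- by rewrite collectP /ip sumf_cat -/(ip _) -/(ip _) IHx IHy.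
- by rewrite collectP /ip sumf_cat -/(ip _) -/(ip _) pscaleP IHx IHy /= scaleN1r.
- by rewrite mulpolyP IHx IHy.
- by rewrite pscaleP IHx.
- by rewrite ppowP IHx.
Qed.

Lemma nf_zero e : List.Forall (fun t => ic t.1 = 0) (nf e) -> iex e = 0.
Proof.
rewrite -nfP; elim=> [|t l Ht _ IH] //.
by rewrite /ip /= -/(ip _) IH addr0 /it Ht scale0r.
Qed.

End Sound.

Import GRing.Theory.
Local Open Scope ring_scope.

Lemma Ffield (F : fieldType) : field_theory (0:F) 1 +%R *%R (fun x y => x - y) -%R
  (fun x y => x / y) GRing.inv (@eq F).
Proof.
split; [split|apply/eqP; exact: oner_neq0|done|move=> x /eqP; exact: mulVf].
exact: add0r. exact: addrC. exact: addrA. exact: mul1r. exact: mulrC. exact: mulrA.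
exact: mulrDl. done. exact: subrr.
Qed.

Lemma icgE (F : fieldType) (q : F) env x :
  icg F 0 1 +%R *%R (fun x y => x - y) -%R (fun x y => x / y) GRing.inv q env x = ic F q env x.
Proof.
elim: x => //= [x -> y ->|x -> y ->|x ->] //.
Qed.

Theorem proposition8p5 (F : closedFieldType) (q a b c a' b' c' u v u' v' : F) :
  q != 0 -> b != 0 -> c != 0 -> b' != 0 -> c' != 0 ->
  q ^+ 2 != 1 -> q ^+ 2 != -1 ->
  u * v' = - (b * b' * q^-1 * (q - q^-1) ^+ 2) ->
  v * u' = - (c * c' * q^-1 * (q - q^-1) ^+ 2) ->
  forall (B : algType F) (e0p e0m e1p e1m K0 K1 K0i K1i : B),
  UqLsl2_rels q e0p e0m e1p e1m K0 K1 K0i K1i ->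
  let R := u *: e0p + v *: (e1m * K1) in
  let L := u' *: e1p + v' *: (e0m * K0) in
  let A := a%:A + b *: K0 + c *: K1 + R in
  let As := a'%:A + b' *: K0 + c' *: K1 + L in
  let g := - (a * (q - q^-1) ^+ 2) in
  let rho := a ^+ 2 * (q - q^-1) ^+ 2 - b * c * (q ^+ 2 - q ^- 2) ^+ 2 in
  let gs := - (a' * (q - q^-1) ^+ 2) in
  let rhos := a' ^+ 2 * (q - q^-1) ^+ 2 - b' * c' * (q ^+ 2 - q ^- 2) ^+ 2 in
  serre q A As = g *: (A ^+ 2 * As - As * A ^+ 2) + rho *: (A * As - As * A) /\
  serre q As A = gs *: (As ^+ 2 * A - A * As ^+ 2) + rhos *: (As * A - A * As).
Proof.
move=> hq hb hc hb' hc' hq2 _ huv hvu B e0p e0m e1p e1m K0 K1 K0i K1i Hrel.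
move=> R L A As g rho gs rhos.
have hqq : q - q^-1 != 0.
  apply: contra hq2; rewrite subr_eq0 => /eqP E.
  by rewrite expr2 {2}E mulfV.
have hq21 : q * q - 1 != 0 by rewrite subr_eq0 -expr2.
have hbb : - (b * b' * q^-1 * (q - q^-1) ^+ 2) != 0.
  by rewrite oppr_eq0 !mulf_neq0 ?invr_eq0 ?expf_neq0.
have hcc : - (c * c' * q^-1 * (q - q^-1) ^+ 2) != 0.
  by rewrite oppr_eq0 !mulf_neq0 ?invr_eq0 ?expf_neq0.
have hu : u != 0 by apply: contra hbb; rewrite -huv => /eqP ->; rewrite mul0r.
have hv : v != 0 by apply: contra hcc; rewrite -hvu => /eqP ->; rewrite mul0r.
have hv' : v' = - (b * b' * q^-1 * ((q - q^-1) * (q - q^-1))) / u.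
  by rewrite -expr2 -huv mulrC mulKf.
have hu' : u' = - (c * c' * q^-1 * ((q - q^-1) * (q - q^-1))) / v.
  by rewrite -expr2 -hvu mulrC mulKf.
pose env := [:: a; b; c; a'; b'; c'; u; v; u'; v'; g; rho; gs; rhos].
have HC : coefhyp F 0 1 *%R (fun x y => x - y) -%R (fun x y => x / y) GRing.inv
    q a b c a' b' c' u v u' v' g rho gs rhos.
  split; first by do !split; apply/eqP.
  by do !split.
have Z : forall e, List.Forall (fun t => icg F 0 1 +%R *%R (fun x y => x - y) -%R
     (fun x y => x / y) GRing.inv q env t.1 = 0) (nf e) ->
   iex F B q env e0p e0m e1p e1m K0 K1 e = 0.
  move=> e He; apply: (@nf_zero F B q env _ _ _ _ _ _ _ _ Hrel hq e); move: He; apply: List.Forall_impl.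
  by move=> t; rewrite icgE.
split; apply/eqP; rewrite -subr_eq0; apply/eqP.
  have H1 := @coef1 F _ _ _ _ _ _ _ _ (Ffield F) _ _ _ _ _ _ _ _ _ _ _ _ _ _ _ HC.
  have H2 := Z E1 H1.
  exact H2.
exact: (Z E2 (@coef2 F _ _ _ _ _ _ _ _ (Ffield F) _ _ _ _ _ _ _ _ _ _ _ _ _ _ _ HC)).
Qed.
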